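(* Consider a GND instance, a reply $\varrho$-oracle ($\varrho\ge1$), and a cost sharing mechanism $M$ whose induced GND game admits an $(A,B)$-bounded potential function $\Phi$ and is $(\lambda,\mu)$-smooth with $\mu < 1/(\varrho\epsilon_1^2)$, where $\epsilon_1=\frac{1+\epsilon}{1-\epsilon}$. Let $Q = \frac{2\epsilon_1 N A}{1-\varrho\epsilon_1^2\mu}$ and $T = \lceil Q \cdot \ln(A B N^{\max_j \alpha_j}) \rceil$. Then the output $p^{t^*}$ of Alg-ABRD (run with $M$, the given $\epsilon$-cost shares and this $T$) satisfies $$C(p^{t^*}) \le \frac{2\varrho\epsilon_1^2\lambda}{1-\varrho\epsilon_1^2\mu}\cdot C^*.$$
   Context: GND instance: finite resource set $E$; requests $i \in [N]$, each with a reply collection $P_i \subseteq 2^E$ and a weight vector $w_i \in \mathbb{Z}_{\geq 1}^E$; constants $q \in \mathbb{Z}_{\ge 1}$, $\alpha_1,\dots,\alpha_q > 1$; for each $e$, $\sigma_e \geq 0$ and $\xi_{e,j} \geq 0$ (at least one $\xi_{e,j}>0$), and cost function $F_e(0)=0$, $F_e(l)=\sigma_e+\sum_j \xi_{e,j} l^{\alpha_j}$ for $l>0$. A strategy profile is $p=(p_1,\dots,p_N)\in P = P_1\times\dots\times P_N$; load $l_e^p=\sum_{i: e\in p_i} w_i(e)$; total cost $C(p)=\sum_e F_e(l_e^p)$; $C^*=\min_{p\in P} C(p)$. Notation $p_{-i}$ denotes $p$ without coordinate $i$ and $(p'_i,p_{-i})$ replaces the $i$-th coordinate by $p'_i$.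 A reply $\varrho$-oracle, given a reply collection $R$ and tolls $\tau:E\to\mathbb{R}_{>0}$, returns $r \in R$ with $\sum_{e\in r}\tau(e) \le \varrho \sum_{e \in r'}\tau(e)$ for all $r'\in R$. A cost sharing mechanism (CSM) $M=\{f_{i,e}\}$ assigns cost shares $f_{i,e}(p) \geq 0$ with $\sum_i f_{i,e}(p) = F_e(l_e^p)$; it is separable and uniform: $f_{i,e}(p)=0$ if $e \notin p_i$, and $f_{i,e}(p)$ depends only on $w_i(e)$ and the multiset of weights $w_{i'}(e)$ of the other players $i'$ with $e \in p_{i'}$. Player $i$'s individual cost is $C_i(p)=\sum_e f_{i,e}(p)$. The induced game is $(\lambda,\mu)$-smooth ($\lambda>0$, $0<\mu<1$) if $\sum_i C_i(p'_i,p_{-i}) \le \lambda C(p') + \mu C(p)$ for all $p,p'\in P$. A function $\Phi:P\to\mathbb{R}_{>0}$ is a potential function if $\Phi(p')-\Phi(p)=C_i(p')-C_i(p)$ whenever $p_{-i}=p'_{-i}$; it is $(A,B)$-bounded ($A,B\ge1$) if $\Phi(p)/A \le C(p) \le B\,\Phi(p)$ for all $p$. Alg-ABRD: fix small $\epsilon>0$. Assume values $\widetilde f_{i,e}(p)$ are fixed for all $i,e,p$ with $(1-\epsilon) f_{i,e}(p) \le \widetilde f_{i,e}(p) \le (1+\epsilon) f_{i,e}(p)$, and set $\widetilde C_i(p)=\sum_e \widetilde f_{i,e}(p)$. Initial profile $p^0$: for each $i$, $p^0_i$ is the oracle's output on $P_i$ with tolls $\tau_i^0(e)=F_e(w_i(e))$.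 For $t=1,\dots,T$: for every $i$ compute $p'_i \in P_i$ with $\widetilde C_i(p'_i,p^{t-1}_{-i}) \le \varrho\, \widetilde C_i(p''_i,p^{t-1}_{-i})$ for all $p''_i\in P_i$, and let $\delta_i^t=\widetilde C_i(p^{t-1}) - \epsilon_1 \widetilde C_i(p'_i,p^{t-1}_{-i})$. If $\delta_i^t \le 0$ for all $i$, set $p^t=p^{t-1}$ and stop. Otherwise let $\Delta^t=\sum_i \delta_i^t$, pick $j$ with $\delta_j^t>0$ and $\delta_j^t \ge \Delta^t/N$, and set $p^t=(p'_j,p^{t-1}_{-j})$. Finally output a generated profile $p^{t^*}$ of minimum total cost $C$. *)

(* Defs.v *)
From HB Require Import structures.
From mathcomp Require Import all_boot all_order all_algebra.
From mathcomp Require Import all_classical all_reals all_analysis.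
Set Implicit Arguments. Unset Strict Implicit. Unset Printing Implicit Defensive.
Import Order.TTheory GRing.Theory Num.Theory.
Local Open Scope ring_scope.

Section GND.
Variables (R : realType) (E : finType) (N : nat).

Definition profile := {ffun 'I_N -> {set E}}.

Definition valid (P : 'I_N -> {set {set E}}) (p : profile) : Prop :=
  forall i, p i \in P i.

Definition upd (p : profile) (i : 'I_N) (r : {set E}) : profile :=
  [ffun k => if k == i then r else p k].

Definition load (w : 'I_N -> E -> nat) (p : profile) (e : E) : nat :=
  (\sum_(i < N | e \in p i) w i e)%N.

Definition Fcost (q : nat) (alpha : 'I_q -> R) (sigma : E -> R)
  (xi : E -> 'I_q -> R) (e : E) (l : nat) : R :=
  if l == 0%N then 0 else sigma e + \sum_(j < q) xi e j * ((l%:R : R) `^ alpha j).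

Definition Ctot (q : nat) (alpha : 'I_q -> R) (sigma : E -> R)
  (xi : E -> 'I_q -> R) (w : 'I_N -> E -> nat) (p : profile) : R :=
  \sum_(e : E) Fcost alpha sigma xi e (load w p e).

Definition Cind (f : 'I_N -> E -> profile -> R) (i : 'I_N) (p : profile) : R :=
  \sum_(e : E) f i e p.

(* multiset (as a sequence, compared up to permutation) of the weights on e of
   the players other than i using e *)
Definition others_weights (w : 'I_N -> E -> nat) (p : profile) (i : 'I_N) (e : E)
  : seq nat :=
  [seq w k e | k <- enum 'I_N & (k != i) && (e \in p k)].

Definition is_CSM (P : 'I_N -> {set {set E}}) (w : 'I_N -> E -> nat)
  (F : E -> nat -> R) (f : 'I_N -> E -> profile -> R) : Prop :=
  [/\ (forall i e p, valid P p -> 0 <= f i e p),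
      (forall e p, valid P p -> \sum_(i < N) f i e p = F e (load w p e)),
      (forall i e p, valid P p -> e \notin p i -> f i e p = 0) &
      (forall i i' e p p', valid P p -> valid P p' ->
         e \in p i -> e \in p' i' -> w i e = w i' e ->
         perm_eq (others_weights w p i e) (others_weights w p' i' e) ->
         f i e p = f i' e p')].

Definition smooth (P : 'I_N -> {set {set E}}) (C : profile -> R)
  (f : 'I_N -> E -> profile -> R) (lam mu : R) : Prop :=
  forall p p', valid P p -> valid P p' ->
    \sum_(i < N) Cind f i (upd p i (p' i)) <= lam * C p' + mu * C p.

Definition is_potential (P : 'I_N -> {set {set E}})
  (f : 'I_N -> E -> profile -> R) (Phi : profile -> R) : Prop :=
  (forall p, valid P p -> 0 < Phi p) /\
  (forall i p p', valid P p -> valid P p' ->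
     (forall k, k != i -> p k = p' k) ->
     Phi p' - Phi p = Cind f i p' - Cind f i p).

Definition bounded_potential (P : 'I_N -> {set {set E}}) (C : profile -> R)
  (Phi : profile -> R) (A B : R) : Prop :=
  1 <= A /\ 1 <= B /\
  forall p, valid P p -> Phi p / A <= C p /\ C p <= B * Phi p.

(* a run of Alg-ABRD with T rounds: profiles ps 0, ps 1, ..., ps tend are the
   generated profiles; br t i is the rho-approximate best response p'_i
   computed in round t+1 against ps t. *)
Definition ABRD_run (P : 'I_N -> {set {set E}}) (w : 'I_N -> E -> nat)
  (F : E -> nat -> R) (ft : 'I_N -> E -> profile -> R) (rho eps1 : R) (T : nat)
  (ps : nat -> profile) (br : nat -> 'I_N -> {set E}) (tend : nat) : Prop :=
  let delta t i := Cind ft i (ps t) - eps1 * Cind ft i (upd (ps t) i (br t i)) in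
  [/\ (* initial profile: oracle outputs with tolls tau_i^0(e) = F_e(w_i(e)) *)
      (forall i, ps 0%N i \in P i /\
         forall r, r \in P i ->
           \sum_(e in ps 0%N i) F e (w i e) <= rho * \sum_(e in r) F e (w i e)),
      (tend <= T)%N,
      (forall t, (t < tend)%N ->
         (forall i, br t i \in P i /\
                forall r, r \in P i ->
                  Cind ft i (upd (ps t) i (br t i)) <= rho * Cind ft i (upd (ps t) i r)) /\
             ((exists j, [/\ 0 < delta t j,
                             (\sum_(i < N) delta t i) / N%:R <= delta t j &
                             ps t.+1 = upd (ps t) j (br t j)])
              \/ ((forall i, delta t i <= 0) /\ ps t.+1 = ps t /\ t.+1 = tend))) &
      (* early termination happens only through the stopping rule *)
      ((tend < T)%N -> exists t, t.+1 = tend /\ forall i, delta t i <= 0)].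

End GND.

(* Main.v *)
Require Import Defs.
From HB Require Import structures.
From mathcomp Require Import all_boot all_order all_algebra.
From mathcomp Require Import all_classical all_reals all_analysis.
From mathcomp Require Import ring lra.
Import Order.TTheory GRing.Theory Num.Theory.
Local Open Scope ring_scope.

Lemma conv2_powR {R : realType} (p t a b : R) : 1 <= p -> 0 <= t -> t <= 1 ->
  0 <= a -> 0 <= b ->
  (t * a + (1 - t) * b) `^ p <= t * a `^ p + (1 - t) * b `^ p.
Proof.
move=> p1 t0 t1 a0 b0.
have := @convex_powR R p p1 (Itv01 t0 t1) a b.
rewrite !inE /= !in_itv /= !andbT => /(_ a0 b0).
by rewrite !convRE /=.
Qed.

Lemma powR_split {R : realType} (y p : R) : 0 <= y -> 0 < p -> y `^ p = y * y `^ (p - 1).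
Proof. by move=> y0 p0; rewrite mulr_powRB1. Qed.

Lemma powR_inv_cancel {R : realType} (y p : R) : 0 < y -> y^-1 `^ p * y `^ p = 1.
Proof.
move=> y0; rewrite -powRM ?invr_ge0 ?ltW // mulVf ?gt_eqF //.
by rewrite powR1.
Qed.

Lemma powmean {R : realType} (I : Type) (s : seq I) (g : I -> R) (p : R) :
  1 <= p -> (forall i, 0 <= g i) ->
  (\sum_(i <- s) g i) `^ p <= (size s)%:R `^ (p - 1) * \sum_(i <- s) g i `^ p.
Proof.
move=> p1 g0; have p0 : 0 < p by apply: lt_le_trans p1.
elim: s => [|x s IH].
  by rewrite !big_nil powR0 ?gt_eqF // mulr0.
rewrite !big_cons /=.
have S0 : 0 <= \sum_(i <- s) g i by apply: sumr_ge0.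
have Sp0 : 0 <= \sum_(i <- s) g i `^ p by apply: sumr_ge0 => i _; apply: powR_ge0.
case: s IH S0 Sp0 => [|y s] IH S0 Sp0.
  by rewrite !big_nil !addr0 powR1 mul1r.
set S := \sum_(i <- y :: s) g i; set Sp := \sum_(i <- y :: s) g i `^ p.
set d : R := (size (y :: s))%:R.
have d0 : 0 < d by rewrite /d ltr0n.
set c : R := (size (y :: s)).+1%:R.
have cd : c = d + 1 by rewrite /c /d -natr1.
have c0 : 0 < c by rewrite cd ltr_wpDr.
have E1 : g x + S = c * (c^-1 * g x + (1 - c^-1) * (d^-1 * S)).
  rewrite cd; field; rewrite -cd; apply/andP; split; apply: lt0r_neq0 => //.
have t0 : 0 <= c^-1 by rewrite invr_ge0 ltW.
have t1 : c^-1 <= 1 by rewrite invf_le1 // cd lerDr.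
have dS0 : 0 <= d^-1 * S by rewrite mulr_ge0 // invr_ge0 ltW.
have m0 : 0 <= c^-1 * g x + (1 - c^-1) * (d^-1 * S).
  by apply: addr_ge0; apply: mulr_ge0; rewrite ?subr_ge0.
rewrite E1 (powRM _ (ltW c0) m0).
apply: le_trans.
  apply: ler_wpM2l; first exact: powR_ge0.
  exact: (@conv2_powR _ p _ _ _ p1 t0 t1 (g0 x) dS0).
have -> : (1 - c^-1) = d / c by rewrite cd; field; rewrite -cd; apply: lt0r_neq0.
have di0 : 0 <= d^-1 by rewrite invr_ge0 ltW.
rewrite (powRM _ di0 S0).
apply: (@le_trans _ _ (c `^ p * (c^-1 * g x `^ p + d / c * ((d^-1) `^ p * (d `^ (p - 1) * Sp))))).
  apply: ler_wpM2l; first exact: powR_ge0.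
  apply: lerD => //; apply: ler_wpM2l; first by rewrite mulr_ge0 ?invr_ge0 ?ltW.
  apply: ler_wpM2l; first exact: powR_ge0.
  exact: IH.
rewrite (@powR_split _ c p (ltW c0) p0) (@powR_split _ d^-1 p di0 p0).
have := @powR_inv_cancel _ d (p - 1) d0.
set u := d^-1 `^ (p - 1); set v := d `^ (p - 1) => uv.
have -> : d / c * (d^-1 * u * (v * Sp)) = c^-1 * Sp.
  have -> : d / c * (d^-1 * u * (v * Sp)) = (d / d) * (u * v) * (c^-1 * Sp) by ring.
  by rewrite uv mulfV ?gt_eqF // !mul1r.
have -> : c * c `^ (p - 1) * (c^-1 * g x `^ p + c^-1 * Sp) = (c / c) * (c `^ (p - 1) * (g x `^ p + Sp)) by ring.
by rewrite mulfV ?gt_eqF // mul1r.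
Qed.

Lemma Fcost_ge0 {R : realType} {E : finType} {q : nat} (alpha : 'I_q -> R)
  (sigma : E -> R) (xi : E -> 'I_q -> R) e l :
  0 <= sigma e -> (forall j, 0 <= xi e j) -> 0 <= Fcost alpha sigma xi e l.
Proof.
move=> s0 x0; rewrite /Fcost; case: eqP => // _.
by apply: addr_ge0 => //; apply: sumr_ge0 => j _; apply: mulr_ge0 => //; apply: powR_ge0.
Qed.

Lemma Fe_le_sum {R : realType} {E : finType} {N : nat} {q : nat} (alpha : 'I_q -> R)
  (sigma : E -> R) (xi : E -> 'I_q -> R) (w : 'I_N -> E -> nat) (amax : R)
  (p : profile E N) (e : E) :
  (forall i e, (1 <= w i e)%N) -> (forall j, 1 < alpha j) -> (forall j, alpha j <= amax) -> 1 <= amax ->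
  0 <= sigma e -> (forall j, 0 <= xi e j) ->
  Fcost alpha sigma xi e (load w p e) <=
    N%:R `^ (amax - 1) * \sum_(i < N | e \in p i) Fcost alpha sigma xi e (w i e).
Proof.
move=> w1 a1 aM am1 s0 x0.
have F0 := fun l => @Fcost_ge0 _ _ _ alpha sigma xi e l s0 x0.
rewrite {1}/Fcost; case: eqP => [_|l0].
  by apply: mulr_ge0; [exact: powR_ge0 | apply: sumr_ge0].
set S := [seq i <- index_enum 'I_N | e \in p i].
have sumS : forall G : 'I_N -> R, \sum_(i < N | e \in p i) G i = \sum_(i <- S) G i.
  by move=> G; rewrite big_filter.
have loadS : load w p e = (\sum_(i <- S) w i e)%N by rewrite /load big_filter.
have kN : (size S <= N)%N.
  rewrite /S deprecated_filter_index_enum -cardE.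
  by apply: leq_trans (max_card _) _; rewrite card_ord.
have k1 : (1 <= size S)%N.
  case: S loadS {sumS kN} => // /=; rewrite big_nil => H; by move: l0; rewrite H.
have N1 : (1 <= N)%N by apply: leq_trans kN.
set M := N%:R `^ (amax - 1).
have M1 : 1 <= M.
  have := @ler_powR _ (N%:R : R) _ 0 (amax - 1); rewrite powRr0; apply.
    by rewrite ler1n.
  by rewrite subr_ge0.
rewrite sumS loadS natr_sum.
have Fw : forall i, Fcost alpha sigma xi e (w i e) =
    sigma e + \sum_(j < q) xi e j * ((w i e)%:R `^ alpha j).
  by move=> i; rewrite /Fcost; case: eqP => // H; move: (w1 i e); rewrite H.
rewrite (eq_bigr _ (fun i _ => Fw i)) big_split /= mulrDr.
apply: lerD.
  apply: (@le_trans _ _ (\sum_(i <- S) sigma e)).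
    case: S k1 {sumS loadS kN} => // y S' _; rewrite big_cons lerDl.
    by apply: sumr_ge0.
  rewrite -{1}(mul1r (\sum_(i <- S) sigma e)); apply: ler_wpM2r => //.
  by apply: sumr_ge0.
rewrite [X in _ <= M * X]exchange_big mulr_sumr; apply: ler_sum => j _.
rewrite -mulr_sumr mulrCA; apply: ler_wpM2l; first exact: x0.
apply: le_trans.
  apply: (@powmean _ _ S (fun i => (w i e)%:R) (alpha j)); first exact: ltW.
  by move=> i; rewrite ler0n.
apply: ler_wpM2r; first by apply: sumr_ge0 => i _; apply: powR_ge0.
apply: (@le_trans _ _ ((N%:R : R) `^ (alpha j - 1))).
  apply: (ge0_ler_powR (r := alpha j - 1)); rewrite ?nnegrE ?ler0n ?ler_nat //.
  by rewrite subr_ge0 ltW.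
apply: ler_powR; first by rewrite ler1n.
by rewrite lerB.
Qed.

Lemma Fmono {R : realType} {E : finType} {q : nat} (alpha : 'I_q -> R)
  (sigma : E -> R) (xi : E -> 'I_q -> R) e (l1 l2 : nat) :
  (forall j, 1 < alpha j) -> (forall j, 0 <= xi e j) ->
  (1 <= l1)%N -> (l1 <= l2)%N ->
  Fcost alpha sigma xi e l1 <= Fcost alpha sigma xi e l2.
Proof.
move=> a1 x0 h1 h12; rewrite /Fcost.
have -> : (l1 == 0)%N = false by case: l1 h1 h12.
have -> : (l2 == 0)%N = false by case: l2 h12 => //; case: l1 h1.
rewrite lerD2l; apply: ler_sum => j _; apply: ler_wpM2l; first exact: x0.
apply: (ge0_ler_powR (r := alpha j)); rewrite ?nnegrE ?ler0n ?ler_nat //.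
by apply: ltW; apply: lt_trans (a1 j).
Qed.

Lemma sum_le_NF {R : realType} {E : finType} {N : nat} {q : nat} (alpha : 'I_q -> R)
  (sigma : E -> R) (xi : E -> 'I_q -> R) (w : 'I_N -> E -> nat)
  (p : profile E N) (e : E) :
  (forall i e, (1 <= w i e)%N) -> (forall j, 1 < alpha j) ->
  0 <= sigma e -> (forall j, 0 <= xi e j) ->
  \sum_(i < N | e \in p i) Fcost alpha sigma xi e (w i e) <=
    N%:R * Fcost alpha sigma xi e (load w p e).
Proof.
move=> w1 a1 s0 x0.
have F0 := fun l => @Fcost_ge0 _ _ _ alpha sigma xi e l s0 x0.
apply: (@le_trans _ _ (\sum_(i < N | e \in p i) Fcost alpha sigma xi e (load w p e))).
  apply: ler_sum => i ei; apply: Fmono => //.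
  by rewrite /load (bigD1 i) //= leq_addr.
apply: (@le_trans _ _ (\sum_(i < N) Fcost alpha sigma xi e (load w p e))).
  by rewrite [X in X <= _]big_mkcond /=; apply: ler_sum => i _; case: ifP.
by rewrite sumr_const card_ord mulr_natl.
Qed.

Lemma exch_sum {R : realType} {E : finType} {N : nat} (p : profile E N)
  (G : 'I_N -> E -> R) :
  \sum_(e : E) \sum_(i < N | e \in p i) G i e = \sum_(i < N) \sum_(e in p i) G i e.
Proof.
rewrite (eq_bigr (fun e => \sum_(i < N) if e \in p i then G i e else 0)); last first.
  by move=> e _; rewrite big_mkcond.
rewrite exchange_big; apply: eq_bigr => i _.
by rewrite [in RHS]big_mkcond.
Qed.

Lemma init_bound {R : realType} {E : finType} {N : nat} {q : nat} (alpha : 'I_q -> R)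
  (sigma : E -> R) (xi : E -> 'I_q -> R) (w : 'I_N -> E -> nat) (amax rho : R)
  (p0 pst : profile E N) :
  (forall i e, (1 <= w i e)%N) -> (forall j, 1 < alpha j) -> (forall j, alpha j <= amax) ->
  1 <= amax -> (forall e, 0 <= sigma e) -> (forall e j, 0 <= xi e j) -> 0 <= rho ->
  (forall i, \sum_(e in p0 i) Fcost alpha sigma xi e (w i e) <=
             rho * \sum_(e in pst i) Fcost alpha sigma xi e (w i e)) ->
  Ctot alpha sigma xi w p0 <= rho * (N%:R `^ amax) * Ctot alpha sigma xi w pst.
Proof.
move=> w1 a1 aM am1 s0 x0 r0 H.
set M := (N%:R : R) `^ (amax - 1).
have M0 : 0 <= M by apply: powR_ge0.
apply: (@le_trans _ _ (\sum_(e : E) M * \sum_(i < N | e \in p0 i) Fcost alpha sigma xi e (w i e))).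
  by apply: ler_sum => e _; apply: Fe_le_sum.
rewrite -mulr_sumr exch_sum.
apply: (@le_trans _ _ (M * \sum_(i < N) rho * \sum_(e in pst i) Fcost alpha sigma xi e (w i e))).
  by apply: ler_wpM2l => //; apply: ler_sum => i _; apply: H.
rewrite -mulr_sumr -exch_sum.
apply: (@le_trans _ _ (M * (rho * \sum_(e : E) N%:R * Fcost alpha sigma xi e (load w pst e)))).
  apply: ler_wpM2l => //; apply: ler_wpM2l => //; apply: ler_sum => e _.
  by apply: sum_le_NF.
rewrite -mulr_sumr /Ctot (@powR_split _ _ amax) ?ler0n //; last by apply: lt_le_trans am1.
rewrite -/M; set S := \sum_e _.
by rewrite (_ : M * (rho * (N%:R * S)) = rho * (N%:R * M) * S) //; ring.
Qed.

Theorem theorem5p3 (R : realType) (E : finType) (N : nat)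
  (P : 'I_N -> {set {set E}}) (w : 'I_N -> E -> nat)
  (q : nat) (alpha : 'I_q -> R) (sigma : E -> R) (xi : E -> 'I_q -> R)
  (rho eps lam mu A B : R)
  (f ft : 'I_N -> E -> profile E N -> R) (Phi : profile E N -> R)
  (T : nat) (ps : nat -> profile E N) (br : nat -> 'I_N -> {set E}) (tend : nat) :
  let F := Fcost alpha sigma xi in
  let C := Ctot alpha sigma xi w in
  let eps1 := (1 + eps) / (1 - eps) in
  let Q := 2 * eps1 * N%:R * A / (1 - rho * eps1 ^+ 2 * mu) in
  let amax := \big[Num.max/1]_(j < q) alpha j in
  (0 < N)%N ->
  (forall i, exists r, r \in P i) ->
  (forall i e, (1 <= w i e)%N) ->
  (0 < q)%N ->
  (forall j, 1 < alpha j) ->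
  (forall e, 0 <= sigma e) ->
  (forall e j, 0 <= xi e j) ->
  (forall e, exists j, 0 < xi e j) ->
  1 <= rho ->
  0 < eps -> eps < 1 ->
  is_CSM P w F f ->
  (forall i e p, valid P p ->
     (1 - eps) * f i e p <= ft i e p /\ ft i e p <= (1 + eps) * f i e p) ->
  is_potential P f Phi ->
  bounded_potential P C Phi A B ->
  0 < lam -> 0 < mu -> mu < 1 ->
  smooth P C f lam mu ->
  mu < 1 / (rho * eps1 ^+ 2) ->
  (T%:Z = Num.ceil (Q * ln (A * B * (N%:R `^ amax)))) ->
  ABRD_run P w F ft rho eps1 T ps br tend ->
  forall tstar, (tstar <= tend)%N ->
  (forall t, (t <= tend)%N -> C (ps tstar) <= C (ps t)) ->
  forall pstar, valid P pstar -> (forall p, valid P p -> C pstar <= C p) ->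
  C (ps tstar) <= 2 * rho * eps1 ^+ 2 * lam / (1 - rho * eps1 ^+ 2 * mu) * C pstar.
Proof.
move=> F C eps1 Q amax N0 Pne w1 q0 a1 s0 x0 xpos rho1 e0 e1 csm ftb pot bnd
  lam0 mu0 mu1 sm muS Tdef run tstar htstar tmin pstar vstar optstar.
case: csm => f0 fsum fout funi.
case: pot => Phi0 Phid.
case: bnd => A1 [B1 PhiC].
move: run; rewrite /ABRD_run /= => -[H0 HT Hstep Hend].
set Cs := C pstar.
set K := 1 - rho * eps1 ^+ 2 * mu.
set r := 2 * rho * eps1 ^+ 2 * lam / K.
have em0 : 0 < 1 - eps by rewrite subr_gt0.
have ep0 : 0 < 1 + eps by apply: addr_gt0.
have eps1_0 : 0 < eps1 by rewrite /eps1 divr_gt0.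
have eps1_1 : 1 <= eps1 by rewrite /eps1 ler_pdivlMr // mul1r lerD2l; lra.
have rho0 : 0 < rho by apply: lt_le_trans rho1.
have re1 : 1 <= rho * eps1 ^+ 2.
  rewrite -[1]mulr1; apply: ler_pM => //; rewrite -[1]mulr1 expr2; apply: ler_pM => //.
have Kpos : 0 < K.
  have h0 : 0 < rho * eps1 ^+ 2 by apply: mulr_gt0 => //; apply: exprn_gt0.
  by rewrite /K subr_gt0; move: muS; rewrite ltr_pdivlMr // mulrC.
have Fge0 : forall e l, 0 <= F e l by move=> e l; apply: Fcost_ge0.
have Cge0 : forall p, 0 <= C p by move=> p; apply: sumr_ge0 => e _; apply: Fge0.
have Cs0 : 0 <= Cs by apply: Cge0.
have valid_upd : forall p i rr, valid P p -> rr \in P i -> valid P (upd p i rr).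
  by move=> p i rr vp hr k; rewrite /upd ffunE; case: eqP => [->|].
have sumC : forall p, valid P p -> \sum_(i < N) Cind f i p = C p.
  move=> p vp; rewrite /Cind exchange_big /C /Ctot; apply: eq_bigr => e _.
  exact: fsum.
have Cb : forall i p, valid P p ->
    (1 - eps) * Cind f i p <= Cind ft i p /\ Cind ft i p <= (1 + eps) * Cind f i p.
  move=> i p vp; rewrite /Cind !mulr_sumr; split; apply: ler_sum => e _;
    by case: (ftb i e p vp).
have key : forall p (b : 'I_N -> {set E}), valid P p ->
    (forall i, b i \in P i /\ forall rr, rr \in P i ->
        Cind ft i (upd p i (b i)) <= rho * Cind ft i (upd p i rr)) ->
    (1 - eps) * (K * C p - rho * eps1 ^+ 2 * lam * Cs) <=
    \sum_(i < N) (Cind ft i p - eps1 * Cind ft i (upd p i (b i))).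
  move=> p b vp hb; rewrite sumrB -mulr_sumr.
  have X1 : (1 - eps) * C p <= \sum_(i < N) Cind ft i p.
    by rewrite -sumC // mulr_sumr; apply: ler_sum => i _; case: (Cb i p vp).
  have X2 : \sum_(i < N) Cind ft i (upd p i (b i)) <= rho * (1 + eps) * (lam * Cs + mu * C p).
    apply: (@le_trans _ _ (\sum_(i < N) rho * (1 + eps) * Cind f i (upd p i (pstar i)))).
      apply: ler_sum => i _; apply: le_trans ((hb i).2 _ (vstar i)) _.
      rewrite -mulrA; apply: ler_wpM2l; first exact: ltW.
      by case: (Cb i (upd p i (pstar i)) (valid_upd _ _ _ vp (vstar i))).
    by rewrite -mulr_sumr; apply: ler_wpM2l; [apply: mulr_ge0; apply: ltW | exact: sm].
  have X3 := ler_wpM2l (ltW eps1_0) X2.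
  apply: le_trans (lerB X1 X3).
  rewrite le_eqVlt; apply/orP; left; apply/eqP; rewrite /K /eps1; field.
  by rewrite lt0r_neq0.
have stopb : forall p (b : 'I_N -> {set E}), valid P p ->
    (forall i, b i \in P i /\ forall rr, rr \in P i ->
        Cind ft i (upd p i (b i)) <= rho * Cind ft i (upd p i rr)) ->
    \sum_(i < N) (Cind ft i p - eps1 * Cind ft i (upd p i (b i))) <= 0 ->
    C p <= r * Cs.
  move=> p b vp hb hs; have := le_trans (key p b vp hb) hs.
  rewrite pmulr_rle0 // subr_le0 => h.
  rewrite /r mulrAC (ler_pdivlMr _ _ Kpos).
  have Z0 : 0 <= rho * eps1 ^+ 2 * lam * Cs.
    apply: mulr_ge0 => //; apply: mulr_ge0; last exact: ltW.
    by apply: mulr_ge0; [exact: ltW | exact: exprn_ge0 (ltW eps1_0)].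
  lra.
have e1m : eps1 * (1 - eps) = 1 + eps by rewrite /eps1; field; rewrite lt0r_neq0.
have A0 : 0 < A by apply: lt_le_trans A1.
have Nr0 : 0 < (N%:R : R) by rewrite ltr0n.
have dec : forall t, (t < tend)%N -> valid P (ps t) -> r * Cs < C (ps t) ->
    Phi (ps t.+1) <= (1 - Q^-1) * Phi (ps t).
  move=> t ht hvp hbig.
  case: (Hstep t ht) => hb hcase.
  case: hcase => [[j [dj dsum hps]] | [alld _]]; last first.
    have : C (ps t) <= r * Cs.
      by apply: (stopb _ (br t) hvp hb); apply: sumr_le0 => i _; apply: alld.
    by rewrite leNgt hbig.
  rewrite hps.
  have hsum := key _ (br t) hvp hb.
  move: hbig dj dsum hsum; set p := ps t => hbig dj dsum hsum.
  set p' := upd p j (br t j).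
  have hvp' : valid P p' := valid_upd _ _ _ hvp (hb j).1.
  have hk : forall k, k != j -> p k = p' k.
    by move=> k kj; rewrite /p' /upd ffunE (negbTE kj).
  have hPhi := Phid j p p' hvp hvp' hk.
  have [c1 _] := Cb j p' hvp'.
  have [_ c2] := Cb j p hvp.
  move: dsum; rewrite (ler_pdivrMr _ _ Nr0) => dsum.
  move: hPhi dj dsum c1 c2.
  set a := Cind f j p; set a' := Cind f j p'; set x := Cind ft j p; set x' := Cind ft j p'.
  set SD := \sum_(i < N) _.
  move=> hPhi dj dsum c1 c2.
  have h3 : (1 + eps) * a' <= eps1 * x'.
    by rewrite -e1m -mulrA; apply: ler_wpM2l => //; exact: ltW.
  have hd : x - eps1 * x' <= (1 + eps) * (a - a') by lra.
  have hA : SD <= (1 + eps) * (a - a') * N%:R.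
    by apply: le_trans dsum _; apply: ler_wpM2r => //; exact: ltW.
  have hbig' : 2 * rho * eps1 ^+ 2 * lam * Cs < C p * K.
    by move: hbig; rewrite /r mulrAC (ltr_pdivrMr _ _ Kpos).
  have hB : (1 - eps) * (K * C p) <= (1 - eps) * (2 * (K * C p - rho * eps1 ^+ 2 * lam * Cs)).
    apply: (ler_wpM2l (ltW em0)); move: hbig'; rewrite (mulrC (C p)); move: (K * C p) => kc h; clearbody r K Cs Q eps1 C F amax; lra.
  have hE : (1 - eps) * (2 * eps1 * (a - a') * N%:R) = 2 * ((1 + eps) * (a - a') * N%:R).
    by rewrite -e1m; ring.
  have hC : (1 - eps) * (K * C p) <= (1 - eps) * (2 * eps1 * (a - a') * N%:R).
    rewrite hE; apply: le_trans hB _; rewrite mulrCA.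
    by apply: ler_wpM2l => //; apply: le_trans hsum hA.
  rewrite (ler_pM2l em0) in hC.
  have hPA : Phi p <= C p * A by rewrite -(ler_pdivrMr _ _ A0); case: (PhiC p hvp).
  have hD : K * Phi p <= (a - a') * (2 * eps1 * N%:R * A).
    apply: (@le_trans _ _ (K * (C p * A))).
      by apply: ler_wpM2l => //; exact: ltW.
    apply: (@le_trans _ _ (2 * eps1 * (a - a') * N%:R * A)).
      by rewrite mulrA ler_pM2r.
    by rewrite le_eqVlt; apply/orP; left; apply/eqP; ring.
  have den0 : 0 < 2 * eps1 * N%:R * A.
    by apply: mulr_gt0 => //; apply: mulr_gt0 => //; apply: mulr_gt0.
  have hQ : Q^-1 * Phi p <= a - a'.
    by rewrite /Q -/K invf_div mulrAC (ler_pdivrMr _ _ den0).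
  lra.
have aM : forall j, alpha j <= amax.
  by move=> j; rewrite /amax (bigD1 j) //= le_max lexx.
have am1 : 1 <= amax.
  rewrite /amax; apply: (big_ind (fun x => 1 <= x)) => //.
    by move=> x y hx hy; rewrite le_max hx.
  by move=> i _; apply: ltW.
have Cinit : C (ps 0%N) <= rho * (N%:R `^ amax) * Cs.
  apply: init_bound => //; first exact: ltW.
  by move=> i; apply: (H0 i).2; apply: vstar.
case: (lerP (C (ps tstar)) (r * Cs)) => // Hbig.
have bigall : forall t, (t <= tend)%N -> r * Cs < C (ps t).
  by move=> t ht; apply: lt_le_trans Hbig (tmin t ht).
have vps : forall t, (t <= tend)%N -> valid P (ps t).
  elim=> [_|t IH ht]; first by move=> i; case: (H0 i).
  case: (Hstep t ht) => hb hc.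
  case: hc => [[j [_ _ ->]] | [_ [-> _]]].
    by apply: valid_upd; [apply: IH; exact: ltnW | exact: (hb j).1].
  by apply: IH; exact: ltnW.
have Nr1 : 1 <= (N%:R : R) by rewrite ler1n.
have Kle1 : K <= 1.
  have : 0 < rho * eps1 ^+ 2 * mu.
    by apply: mulr_gt0 => //; apply: mulr_gt0 => //; apply: exprn_gt0.
  by rewrite /K; lra.
have Q0 : 0 < Q.
  rewrite /Q -/K; apply: divr_gt0 => //.
  by apply: mulr_gt0 => //; apply: mulr_gt0 => //; apply: mulr_gt0.
have Q1 : 1 <= Q.
  rewrite /Q -/K ler_pdivlMr // mul1r; apply: le_trans Kle1 _.
  apply: mulr_ege1 => //; apply: mulr_ege1 => //; apply: mulr_ege1 => //.
  by rewrite ler1n.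
have q0' : 0 <= 1 - Q^-1 by rewrite subr_ge0 invf_le1.
have pw : forall t, (t <= tend)%N -> Phi (ps t) <= (1 - Q^-1) ^+ t * Phi (ps 0%N).
  elim=> [_|t IH ht]; first by rewrite expr0 mul1r.
  apply: le_trans (dec t ht (vps t (ltnW ht)) (bigall t (ltnW ht))) _.
  rewrite exprS -mulrA; apply: ler_wpM2l => //; apply: IH; exact: ltnW.
have tT : tend = T.
  case: (ltnP tend T) => [lt|ge]; last by apply/eqP; rewrite eqn_leq HT ge.
  have [t [ht alld]] := Hend lt.
  have htl : (t < tend)%N by rewrite -ht.
  have := stopb _ (br t) (vps t (ltnW htl)) (Hstep t htl).1.
  have hs : \sum_(i < N) (Cind ft i (ps t) - eps1 * Cind ft i (upd (ps t) i (br t i))) <= 0.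
    by apply: sumr_le0 => i _; apply: alld.
  move=> /(_ hs); rewrite leNgt bigall //; exact: ltnW.
have r0 : 0 <= r.
  rewrite /r; apply: divr_ge0; last exact: ltW.
  apply: mulr_ge0; last exact: ltW.
  by apply: mulr_ge0; [apply: mulr_ge0 => //; exact: ltW | apply: exprn_ge0; exact: ltW].
have Cpos : 0 < C (ps tstar) by apply: le_lt_trans Hbig; apply: mulr_ge0.
have lm1 : 1 <= lam + mu.
  have updid : forall (p : profile E N) i, upd p i (p i) = p.
    by move=> p i; apply/ffunP => k; rewrite ffunE; case: eqP => [->|].
  have := sm _ _ (vps _ htstar) (vps _ htstar).
  rewrite (eq_bigr (fun i => Cind f i (ps tstar))); last by move=> i _; rewrite updid.
  rewrite sumC; last exact: vps.
  rewrite -mulrDl -{1}(mul1r (C (ps tstar))) ler_pM2r //.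
have rr : rho <= r.
  have h1 : mu <= rho * eps1 ^+ 2 * mu.
    by rewrite -{1}(mul1r mu) ler_pM2r.
  have e2 : 1 <= eps1 ^+ 2 by apply: exprn_ege1.
  have h2 : lam <= eps1 ^+ 2 * lam by rewrite -{1}(mul1r lam) ler_pM2r.
  have hK : K <= 2 * eps1 ^+ 2 * lam by rewrite /K; lra.
  rewrite /r ler_pdivlMr //.
  have : rho * K <= rho * (2 * eps1 ^+ 2 * lam) by rewrite ler_pM2l.
  by move=> h; apply: le_trans h _; rewrite le_eqVlt; apply/orP; left; apply/eqP; ring.
set Nam := (N%:R : R) `^ amax.
have Nam1 : 1 <= Nam.
  have := @ler_powR _ (N%:R : R) Nr1 0 amax; rewrite powRr0; apply.
  by apply: le_trans am1.
set X := A * B * Nam.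
have X1 : 1 <= X by apply: mulr_ege1 => //; apply: mulr_ege1.
have X0 : 0 < X by apply: lt_le_trans X1.
have hT : Q * ln X <= T%:R.
  have := ceil_ge (Q * ln X); rewrite -Tdef; exact.
have hx : (1 - Q^-1) ^+ T <= X^-1.
  apply: (@le_trans _ _ (expR (- Q^-1) ^+ T)).
    apply: lerXn2r; rewrite ?nnegrE ?expR_ge0 //.
    by have := expR_ge1Dx (- Q^-1).
  rewrite -expRM_natr.
  have eX : X^-1 = expR (- ln X) by rewrite expRN lnK // posrE.
  rewrite eX ler_expR mulNr lerN2 mulrC (ler_pdivlMr _ _ Q0) mulrC //.
have vT : valid P (ps T) by rewrite -tT; apply: vps.
have c1 := (PhiC (ps T) vT).2.
have c2 := pw T (eq_leq (esym tT)).
have c3 : Phi (ps 0%N) <= C (ps 0%N) * A.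
  by rewrite -(ler_pdivrMr _ _ A0); case: (PhiC (ps 0%N) (vps 0%N (leq0n _))).
have fin : C (ps T) <= rho * Cs.
  apply: le_trans c1 _.
  apply: (@le_trans _ _ (B * (X^-1 * (rho * Nam * Cs * A)))).
    apply: ler_wpM2l; first by apply: le_trans B1.
    apply: le_trans c2 _.
    apply: ler_pM => //; first exact: exprn_ge0.
      exact: ltW (Phi0 _ (vps _ (leq0n _))).
    apply: le_trans c3 _; rewrite ler_pM2r //.
  rewrite le_eqVlt; apply/orP; left; apply/eqP; rewrite /X; field.
  have B0 : 0 < B by apply: lt_le_trans B1.
  have Nam0 : 0 < Nam by apply: lt_le_trans Nam1.
  by rewrite !lt0r_neq0.
have := bigall T (eq_leq (esym tT)).
move=> hb; have : C (ps T) <= r * Cs.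
  by apply: le_trans fin _; rewrite ler_wpM2r.
by rewrite leNgt hb.
Qed.
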